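(* Let $A$ be a partially ordered set with top and bottom elements, and let $G$ be a game over $A$ that has a canonical form (i.e., there is a game in canonical form equivalent to $G$). Then $G$ is equivalent to a monotone game if and only if the canonical form of $G$ is passable.
   Context: Games over a poset $A$ are defined inductively: for each $a\in A$ there is an atomic game $[a]$, which has no options; and if $L$ and $R$ are non-empty sets of games, then $\{L\mid R\}$ is a composite game with left options $L$ and right options $R$. The relations $\le$ and $\lhd$ are defined by simultaneous recursion: $G\le H$ iff (1) every left option $G^L$ of $G$ satisfies $G^L\lhd H$, (2) every right option $H^R$ of $H$ satisfies $G\lhd H^R$, and (3) if $G$ or $H$ is atomic then $G\lhd H$; and $G\lhd H$ iff (1) some right option $G^R$ of $G$ satisfies $G^R\le H$, or (2) some left option $H^L$ of $H$ satisfies $G\le H^L$, or (3) $G=[a]$, $H=[b]$ are atomic and $a\le b$. $G\equiv H$ means $G\le H$ and $H\le G$. A game $G$ is passable if $G\lhd G$ and recursively all its options are passable. A left option $G^L$ is good if $G\le G^L$, a right option $G^R$ is good if $G^R\le G$; a game is monotone if all its options are good and recursively all its options are monotone. Canonical form: among distinct left options $H,K$ of $G$, $K$ is dominated if $K\le H$; among distinct right options $H,K$, $K$ is dominated if $H\le K$. A left option $H$ of $G$ is reversible if $H$ has a right option $K$ with $K\le G$; a right option $H$ of $G$ is reversible if $H$ has a left option $K$ with $G\le K$. An option $H$ of $G$ is a passing option if $H\equiv G$. $G$ is in canonical form if it has no dominated, reversible or passing options and all its options are in canonical form. Two equivalent games in canonical form are equal; ''the canonical form of $G$'' is the unique game in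 canonical form equivalent to $G$. *)

(* Defs.v *)
From mathcomp Require Import all_boot all_order.
Set Implicit Arguments. Unset Strict Implicit. Unset Printing Implicit Defensive.

Section Games.
Variable (A : Type).

(* Games over A.  A composite game {L | R} has non-empty families of left and
   right options, indexed by arbitrary (inhabited) types: the option "sets"
   are the images of the families. *)
Inductive game : Type :=
| Atom : A -> game
| Comp : forall (I J : Type), inhabited I -> inhabited J ->
           (I -> game) -> (J -> game) -> game.

Definition is_atom (G : game) : Prop :=
  match G with Atom _ => True | Comp _ _ _ _ _ _ => False end.

Definition left_opt (G K : game) : Prop :=
  match G with Atom _ => False | Comp _ _ _ _ L _ => exists i, L i = K end.

Definition right_opt (G K : game) : Prop :=
  match G with Atom _ => False | Comp _ _ _ _ _ R => exists j, R j = K end.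

Definition opt (G K : game) : Prop := left_opt G K \/ right_opt G K.

(* Equality of games as sets (extensional equality of option sets). *)
Inductive game_eq : game -> game -> Prop :=
| game_eq_atom a : game_eq (Atom a) (Atom a)
| game_eq_comp G H :
    ~ is_atom G -> ~ is_atom H ->
    (forall K, left_opt G K -> exists K', left_opt H K' /\ game_eq K K') ->
    (forall K', left_opt H K' -> exists K, left_opt G K /\ game_eq K K') ->
    (forall K, right_opt G K -> exists K', right_opt H K' /\ game_eq K K') ->
    (forall K', right_opt H K' -> exists K, right_opt G K /\ game_eq K K') ->
    game_eq G H.
End Games.

Arguments Atom {A}.

Section Order.
Variables (disp : Order.disp_t) (A : porderType disp).
Local Notation game := (game A).

Inductive game_le : game -> game -> Prop :=
| game_le_intro G H :
    (forall GL, left_opt G GL -> game_lf GL H) ->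
    (forall HR, right_opt H HR -> game_lf G HR) ->
    ((is_atom G \/ is_atom H) -> game_lf G H) ->
    game_le G H
with game_lf : game -> game -> Prop :=
| game_lf_right G H GR : right_opt G GR -> game_le GR H -> game_lf G H
| game_lf_left G H HL : left_opt H HL -> game_le G HL -> game_lf G H
| game_lf_atom (a b : A) : (a <= b)%O -> game_lf (Atom a) (Atom b).

Definition game_equiv (G H : game) : Prop := game_le G H /\ game_le H G.

Inductive passable : game -> Prop :=
| passable_intro G :
    game_lf G G -> (forall K, opt G K -> passable K) -> passable G.

Inductive monotone : game -> Prop :=
| monotone_intro G :
    (forall K, left_opt G K -> game_le G K) ->
    (forall K, right_opt G K -> game_le K G) ->
    (forall K, opt G K -> monotone K) -> monotone G.

Inductive canonical : game -> Prop :=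
| canonical_intro G :
    (forall H K, left_opt G H -> left_opt G K -> ~ game_eq H K -> ~ game_le K H) ->
    (forall H K, right_opt G H -> right_opt G K -> ~ game_eq H K -> ~ game_le H K) ->
    (forall H K, left_opt G H -> right_opt H K -> ~ game_le K G) ->
    (forall H K, right_opt G H -> left_opt H K -> ~ game_le G K) ->
    (forall H, opt G H -> ~ game_equiv H G) ->
    (forall H, opt G H -> canonical H) ->
    canonical G.
End Order.

(* Main.v *)
Require Import Defs.
From mathcomp Require Import all_boot all_order.
From Stdlib Require Import Classical IndefiniteDescription.
Set Implicit Arguments. Unset Strict Implicit.

Section Proofs.
Variables (disp : Order.disp_t) (A : tbPOrderType disp).
Local Notation game := (game A).
Local Notation le := (@game_le disp A).
Local Notation lf := (@game_lf disp A).

Lemma le_inv (G H : game) : le G H ->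
  (forall GL, left_opt G GL -> lf GL H) /\
  (forall HR, right_opt H HR -> lf G HR) /\
  ((is_atom G \/ is_atom H) -> lf G H).
Proof. intro h; inversion h; subst; auto. Qed.

Lemma lf_inv (G H : game) : lf G H ->
  (exists GR, right_opt G GR /\ le GR H) \/
  (exists HL, left_opt H HL /\ le G HL) \/
  (exists a b, G = Atom a /\ H = Atom b /\ (a <= b)%O).
Proof. intro h; inversion h; subst; eauto 10. Qed.

Lemma opt_wf : well_founded (fun K G : game => opt G K).
Proof.
intro G; induction G as [a|I J hI hJ L IHL R IHR]; constructor.
- intros K [[]|[]].
- intros K [[i <-]|[j <-]]; auto.
Qed.

Lemma le_refl (G : game) : le G G.
Proof.
induction G as [a|I J hI hJ L IHL R IHR]; constructor.
- intros _ [].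
- intros _ [].
- intros _; apply game_lf_atom; apply Order.POrderTheory.le_refl.
- intros K [i <-]. apply (@game_lf_left _ _ _ _ (L i)); [exists i; auto| auto].
- intros K [j <-]. apply (@game_lf_right _ _ _ _ (R j)); [exists j; auto| auto].
- intros [[]|[]].
Qed.

Lemma lf_of_left (G K : game) : left_opt G K -> lf K G.
Proof. intro h; exact (game_lf_left h (le_refl K)). Qed.
Lemma lf_of_right (G K : game) : right_opt G K -> lf G K.
Proof. intro h; exact (game_lf_right h (le_refl K)). Qed.

Lemma atom_le (a b : A) : (a <= b)%O -> le (Atom a) (Atom b).
Proof.
intro h; constructor; [intros _ []|intros _ []|intros _; now apply game_lf_atom].
Qed.

Definition T3 (x y z : game) :=
  (le x y -> le y z -> le x z) /\
  (lf x y -> le y z -> lf x z) /\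
  (le x y -> lf y z -> lf x z).

Lemma trans_all x : forall y z, T3 x y z.
Proof.
induction x as [x IHx] using (well_founded_ind opt_wf).
intros y; induction y as [y IHy] using (well_founded_ind opt_wf).
intros z; induction z as [z IHz] using (well_founded_ind opt_wf).
assert (LFLE : lf x y -> le y z -> lf x z).
{ intros Hxy Hyz. destruct (le_inv Hyz) as [Hy1 [Hy2 Hy3]].
  destruct (lf_inv Hxy) as [[xR [HxR HxRy]]|[[yL [HyL HxyL]]|[a [b [-> [-> Hab]]]]]].
  - apply (game_lf_right HxR). apply (proj1 (IHx xR (or_intror HxR) y z)); auto.
  - apply (proj2 (proj2 (IHy yL (or_introl HyL) z))); auto.
  - assert (Hyz' : lf (Atom b) z) by (apply Hy3; left; exact I).
    destruct (lf_inv Hyz') as [[? [[] _]]|[[zL [HzL HbzL]]|[b' [c [Hb [-> Hbc]]]]]].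
    + apply (game_lf_left HzL). apply (proj1 (IHz zL (or_introl HzL))); auto.
      now apply atom_le.
    + injection Hb as <-. apply game_lf_atom. exact (Order.POrderTheory.le_trans Hab Hbc). }
assert (LELF : le x y -> lf y z -> lf x z).
{ intros Hxy Hyz. destruct (le_inv Hxy) as [Hx1 [Hx2 Hx3]].
  destruct (lf_inv Hyz) as [[yR [HyR HyRz]]|[[zL [HzL HyzL]]|[b [c [-> [-> Hbc]]]]]].
  - apply (proj1 (proj2 (IHy yR (or_intror HyR) z))); auto.
  - apply (game_lf_left HzL). apply (proj1 (IHz zL (or_introl HzL))); auto.
  - assert (Hxy' : lf x (Atom b)) by (apply Hx3; right; exact I).
    destruct (lf_inv Hxy') as [[xR [HxR HxRb]]|[[? [[] _]]|[a [b' [-> [Hb Hab]]]]]].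
    + apply (game_lf_right HxR). apply (proj1 (IHx xR (or_intror HxR) (Atom b) (Atom c))); auto.
      now apply atom_le.
    + injection Hb as <-. apply game_lf_atom. exact (Order.POrderTheory.le_trans Hab Hbc). }
split; [|split]; auto.
intros Hxy Hyz. destruct (le_inv Hxy) as [Hx1 [Hx2 Hx3]].
destruct (le_inv Hyz) as [Hy1 [Hy2 Hy3]].
constructor.
- intros xL HxL. apply (proj1 (proj2 (IHx xL (or_introl HxL) y z))); auto.
- intros zR HzR. apply (proj2 (proj2 (IHz zR (or_intror HzR)))); auto.
- intros [Ha|Ha].
  + apply LFLE; auto.
  + apply LELF; auto.
Qed.

Lemma le_trans x y z : le x y -> le y z -> le x z.
Proof. exact (proj1 (trans_all x y z)). Qed.
Lemma lf_le_trans x y z : lf x y -> le y z -> lf x z.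
Proof. exact (proj1 (proj2 (trans_all x y z))). Qed.
Lemma le_lf_trans x y z : le x y -> lf y z -> lf x z.
Proof. exact (proj2 (proj2 (trans_all x y z))). Qed.


Local Notation TOP := (Atom (@Order.top disp A)).
Local Notation BOT := (Atom (@Order.bottom disp A)).

Lemma bot_all (G : game) : le BOT G /\ lf BOT G.
Proof.
induction G as [a|I J hI hJ L IHL R IHR].
- assert (h : lf BOT (Atom a)) by exact (@game_lf_atom disp A _ _ (@Order.le0x disp A a)).
  split; auto. constructor; [intros _ []|intros _ []|auto].
- assert (h : lf BOT (Comp hI hJ L R)).
  { destruct hI as [i]. apply (@game_lf_left _ _ _ _ (L i)); [exists i; auto|apply IHL]. }
  split; auto. constructor; [intros _ []| |auto].
  intros K [j <-]. apply IHR.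
Qed.

Lemma top_all (G : game) : le G TOP /\ lf G TOP.
Proof.
induction G as [a|I J hI hJ L IHL R IHR].
- assert (h : lf (Atom a) TOP) by exact (@game_lf_atom disp A _ _ (@Order.lex1 disp A a)).
  split; auto. constructor; [intros _ []|intros _ []|auto].
- assert (h : lf (Comp hI hJ L R) TOP).
  { destruct hJ as [j]. apply (@game_lf_right _ _ _ _ (R j)); [exists j; auto|apply IHR]. }
  split; auto. constructor; [|intros _ []|auto].
  intros K [i <-]. apply IHL.
Qed.

Definition TopL (J : Type) (hJ : inhabited J) (Q : J -> game) : game :=
  Comp (inhabits tt) hJ (fun _ : unit => TOP) Q.
Definition BotR (I : Type) (hI : inhabited I) (P : I -> game) : game :=
  Comp hI (inhabits tt) P (fun _ : unit => BOT).
Definition U (Y : game) : game := TopL (inhabits tt) (fun _ : unit => Y).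
Definition D (Y : game) : game := BotR (inhabits tt) (fun _ : unit => Y).

Lemma le_TopL J (hJ : inhabited J) (Q : J -> game) H :
  (forall j, lf H (Q j)) -> le H (TopL hJ Q).
Proof.
intro h. constructor.
- intros K _. apply (@game_lf_left _ _ _ _ TOP); [exists tt; auto|apply top_all].
- intros K [j <-]. auto.
- intros _. apply (@game_lf_left _ _ _ _ TOP); [exists tt; auto|apply top_all].
Qed.

Lemma lf_TopL_any J (hJ : inhabited J) (Q : J -> game) H : lf H (TopL hJ Q).
Proof. apply (@game_lf_left _ _ _ _ TOP); [exists tt; auto|apply top_all]. Qed.

Lemma TopL_lf J (hJ : inhabited J) (Q : J -> game) H j :
  le (Q j) H -> lf (TopL hJ Q) H.
Proof. intro h. apply (@game_lf_right _ _ _ _ (Q j)); [exists j; auto|auto]. Qed.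

Lemma BotR_le I (hI : inhabited I) (P : I -> game) H :
  (forall i, lf (P i) H) -> le (BotR hI P) H.
Proof.
intro h. constructor.
- intros K [i <-]. auto.
- intros K _. apply (@game_lf_right _ _ _ _ BOT); [exists tt; auto|apply bot_all].
- intros _. apply (@game_lf_right _ _ _ _ BOT); [exists tt; auto|apply bot_all].
Qed.

Lemma lf_BotR_any I (hI : inhabited I) (P : I -> game) H : lf (BotR hI P) H.
Proof. apply (@game_lf_right _ _ _ _ BOT); [exists tt; auto|apply bot_all]. Qed.

Lemma lf_BotR I (hI : inhabited I) (P : I -> game) H i :
  le H (P i) -> lf H (BotR hI P).
Proof. intro h. apply (@game_lf_left _ _ _ _ (P i)); [exists i; auto|auto]. Qed.

Lemma mono_inv (M : game) : monotone M ->
  (forall K, left_opt M K -> le M K) /\ (forall K, right_opt M K -> le K M) /\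
  (forall K, opt M K -> monotone K).
Proof. intro h; inversion h; subst; auto. Qed.

Lemma mono_atom (a : A) : monotone (Atom a).
Proof. constructor; intros _ [[]|[]] || intros _ []. Qed.

Lemma mono_lf (M : game) : monotone M -> lf M M.
Proof.
intro h. destruct (mono_inv h) as [h1 _].
destruct M as [a|I J hI hJ L R].
- apply game_lf_atom, Order.POrderTheory.le_refl.
- destruct hI as [i]. apply (@game_lf_left _ _ _ _ (L i)); [exists i; auto|].
  apply h1. exists i; auto.
Qed.

Lemma mono_TopL J (hJ : inhabited J) (Q : J -> game) :
  (forall j, monotone (Q j)) -> (forall j k, lf (Q j) (Q k)) -> monotone (TopL hJ Q).
Proof.
intros h1 h2. constructor.
- intros K [[] <-]. apply top_all.
- intros K [j <-]. apply le_TopL. auto.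
- intros K [[[] <-]|[j <-]]; [apply mono_atom|auto].
Qed.

Lemma mono_BotR I (hI : inhabited I) (P : I -> game) :
  (forall i, monotone (P i)) -> (forall i k, lf (P k) (P i)) -> monotone (BotR hI P).
Proof.
intros h1 h2. constructor.
- intros K [i <-]. apply BotR_le. auto.
- intros K [[] <-]. apply bot_all.
- intros K [[i <-]|[[] <-]]; [auto|apply mono_atom].
Qed.

Lemma mono_U Y : monotone Y -> lf Y Y -> monotone (U Y).
Proof. intros; apply mono_TopL; auto. Qed.
Lemma mono_D Y : monotone Y -> lf Y Y -> monotone (D Y).
Proof. intros; apply mono_BotR; auto. Qed.

Lemma eq_le (G : game) : forall H, game_eq G H -> le G H /\ le H G.
Proof.
induction G as [a|I J hI hJ L IHL R IHR]; intros H h; inversion h; subst.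
- split; apply le_refl.
- exfalso; apply H1; exact I.
- split; constructor.
  + intros K [i <-]. destruct (H3 (L i) (ex_intro _ i (Logic.eq_refl _))) as [K' [HK' He]].
    apply (game_lf_left HK'). apply (proj1 (IHL i K' He)).
  + intros K' HK'. destruct (H6 K' HK') as [K [[j <-] He]].
    apply (@game_lf_right _ _ _ _ (R j)); [exists j; auto|]. apply (proj1 (IHR j K' He)).
  + intros [Ha|Ha]; [elim H1|elim H2]; exact Ha.
  + intros K' HK'. destruct (H4 K' HK') as [K [[i <-] He]].
    apply (@game_lf_left _ _ _ _ (L i)); [exists i; auto|]. apply (proj2 (IHL i K' He)).
  + intros K [j <-]. destruct (H5 (R j) (ex_intro _ j (Logic.eq_refl _))) as [K' [HK' He]].
    apply (game_lf_right HK'). apply (proj2 (IHR j K' He)).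
  + intros [Ha|Ha]; [elim H2|elim H1]; exact Ha.
Qed.


Definition gequiv (G H : game) := le G H /\ le H G.

Section Construct.
Variables (I J : Type) (hI : inhabited I) (hJ : inhabited J) (L : I -> game) (R : J -> game).
Variables (ML : I -> game) (MR : J -> game).
Hypothesis hML : forall i, monotone (ML i) /\ le (L i) (ML i) /\ le (ML i) (L i).
Hypothesis hMR : forall j, monotone (MR j) /\ le (R j) (MR j) /\ le (MR j) (R j).
Variables (pe qe : game).
Let C := Comp hI hJ L R.
Hypotheses (Hpe1 : le pe C) (Hpe2 : lf C pe) (Hqe1 : le C qe) (Hqe2 : lf qe C)
  (Hpe3 : monotone pe) (Hpe4 : lf pe pe) (Hqe3 : monotone qe) (Hqe4 : lf qe qe).

Definition Qf (o : option J) : game :=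
  match o with Some j => D (U (MR j)) | None => D qe end.
Definition Pf (o : option I) : game :=
  match o with Some i => U (D (ML i)) | None => U pe end.
Definition Xr := TopL (inhabits (@None J)) Qf.
Definition Xl := BotR (inhabits (@None I)) Pf.
Definition N : game :=
  Comp (inhabits tt) (inhabits tt) (fun _ : unit => U Xl) (fun _ : unit => D Xr).

Lemma N_le_C : le N C.
Proof.
constructor.
- intros K [[] <-]. apply (@TopL_lf _ _ _ _ tt). apply BotR_le. intros [i|]; simpl.
  + apply (@TopL_lf _ _ _ _ tt). apply BotR_le. intros _.
    apply (@game_lf_left _ _ _ _ (L i)); [exists i; auto|apply hML].
  + apply (@TopL_lf _ _ _ _ tt). exact Hpe1.
- intros K [j <-]. apply (@game_lf_right _ _ _ _ (D Xr)); [exists tt; auto|].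
  apply BotR_le. intros _. apply (@TopL_lf _ _ _ _ (Some j)). simpl.
  apply BotR_le. intros _. apply (@TopL_lf _ _ _ _ tt). apply hMR.
- intros [[]|[]].
Qed.

Lemma C_le_N : le C N.
Proof.
constructor.
- intros K [i <-]. apply (@game_lf_left _ _ _ _ (U Xl)); [exists tt; auto|].
  apply le_TopL. intros _. apply (@lf_BotR _ _ _ _ (Some i)). simpl.
  apply le_TopL. intros _. apply (@lf_BotR _ _ _ _ tt). apply hML.
- intros K [[] <-]. apply (@lf_BotR _ _ _ _ tt). apply le_TopL. intros [j|]; simpl.
  + apply (@lf_BotR _ _ _ _ tt). apply le_TopL. intros _.
    apply (@game_lf_right _ _ _ _ (R j)); [exists j; auto|apply hMR].
  + apply (@lf_BotR _ _ _ _ tt). exact Hqe1.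
- intros [[]|[]].
Qed.

Lemma N_mono : monotone N.
Proof.
constructor.
- intros K [[] <-]. apply le_TopL. intros _. apply (@lf_BotR _ _ _ _ None). simpl.
  apply le_TopL. intros _. exact (le_lf_trans N_le_C Hpe2).
- intros K [[] <-]. apply BotR_le. intros _. apply (@TopL_lf _ _ _ _ None). simpl.
  apply BotR_le. intros _. exact (lf_le_trans Hqe2 C_le_N).
- intros K [[[] <-]|[[] <-]].
  + apply mono_U; [|apply lf_BotR_any]. apply mono_BotR.
    * intros [i|]; simpl.
      -- apply mono_U; [|apply lf_BotR_any]. apply mono_D; [apply hML|apply mono_lf, hML].
      -- apply mono_U; auto.
    * intros [i|] k; apply lf_TopL_any.
  + apply mono_D; [|apply lf_TopL_any]. apply mono_TopL.
    * intros [j|]; simpl.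
      -- apply mono_D; [|apply lf_TopL_any]. apply mono_U; [apply hMR|apply mono_lf, hMR].
      -- apply mono_D; auto.
    * intros [j|] k; apply lf_BotR_any.
Qed.
End Construct.

Lemma pass_mono (G : game) : passable G -> exists M, monotone M /\ gequiv G M.
Proof.
induction 1 as [G Hlf Hopts IH].
destruct G as [a|I J hI hJ L R].
- exists (Atom a). split; [apply mono_atom|split; apply le_refl].
- assert (hL : forall i, exists M, monotone M /\ gequiv (L i) M).
  { intro i. apply IH. left. exists i; auto. }
  assert (hR : forall j, exists M, monotone M /\ gequiv (R j) M).
  { intro j. apply IH. right. exists j; auto. }
  pose (ML := fun i => proj1_sig (constructive_indefinite_description _ (hL i))).
  pose (MR := fun j => proj1_sig (constructive_indefinite_description _ (hR j))).
  assert (hML : forall i, monotone (ML i) /\ le (L i) (ML i) /\ le (ML i) (L i)).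
  { intro i. unfold ML. destruct (constructive_indefinite_description _ (hL i)) as [M [h1 [h2 h3]]].
    simpl. auto. }
  assert (hMR : forall j, monotone (MR j) /\ le (R j) (MR j) /\ le (MR j) (R j)).
  { intro j. unfold MR. destruct (constructive_indefinite_description _ (hR j)) as [M [h1 [h2 h3]]].
    simpl. auto. }
  set (C := Comp hI hJ L R) in *.
  destruct (lf_inv Hlf) as [[GR [[j0 <-] Hj0]]|[[GL [[i0 <-] Hi0]]|[a [b [Ha _]]]]].
  +
    destruct (hMR j0) as [m1 [m2 m3]].
    assert (Hpe1 : le (MR j0) C) by exact (le_trans m3 Hj0).
    assert (Hpe2 : lf C (MR j0)).
    { apply (@game_lf_right _ _ _ _ (R j0)); [exists j0; auto|exact m2]. }
    assert (Hqe1 : le C (U (MR j0))) by (apply le_TopL; auto).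
    assert (Hqe2 : lf (U (MR j0)) C) by (apply (@TopL_lf _ _ _ _ tt); exact Hpe1).
    exists (N ML MR (MR j0) (U (MR j0))). split.
    * refine (N_mono hML hMR Hpe1 Hpe2 Hqe1 Hqe2 _ _ _ _); auto.
      -- apply mono_lf; auto.
      -- apply mono_U; [auto|apply mono_lf; auto].
      -- apply lf_TopL_any.
    * split; [exact (C_le_N hML hMR _ Hqe1)|exact (N_le_C hML hMR _ Hpe1)].
  +
    destruct (hML i0) as [m1 [m2 m3]].
    assert (Hqe1 : le C (ML i0)) by exact (le_trans Hi0 m2).
    assert (Hqe2 : lf (ML i0) C).
    { apply (@game_lf_left _ _ _ _ (L i0)); [exists i0; auto|exact m3]. }
    assert (Hpe1 : le (D (ML i0)) C) by (apply BotR_le; auto).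
    assert (Hpe2 : lf C (D (ML i0))) by (apply (@lf_BotR _ _ _ _ tt); exact Hqe1).
    exists (N ML MR (D (ML i0)) (ML i0)). split.
    * refine (N_mono hML hMR Hpe1 Hpe2 Hqe1 Hqe2 _ _ _ _); auto.
      -- apply mono_D; [auto|apply mono_lf; auto].
      -- apply lf_BotR_any.
      -- apply mono_lf; auto.
    * split; [exact (C_le_N hML hMR _ Hqe1)|exact (N_le_C hML hMR _ Hpe1)].
  + discriminate Ha.
Qed.


Lemma chain (C : game) : forall X,
  (monotone X -> le C X -> lf X C -> lf C C) /\
  (monotone X -> le X C -> lf C X -> lf C C).
Proof.
intro X; induction X as [X IHX] using (well_founded_ind opt_wf).
assert (P : monotone X -> le C X -> lf X C -> lf C C).
{ intros hm hCX hXC. destruct (mono_inv hm) as [_ [_ hm3]].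
  destruct (lf_inv hXC) as [[W [HW HWC]]|[[L' [HL' HXL']]|[a [b [_ [Hc _]]]]]].
  - exact (proj2 (IHX W (or_intror HW)) (hm3 W (or_intror HW)) HWC (proj1 (proj2 (le_inv hCX)) W HW)).
  - apply (game_lf_left HL'). exact (le_trans hCX HXL').
  - rewrite Hc. apply game_lf_atom, Order.POrderTheory.le_refl. }
split; auto.
intros hm hXC hCX. destruct (mono_inv hm) as [_ [_ hm3]].
destruct (lf_inv hCX) as [[R' [HR' HR'X]]|[[K [HK HCK]]|[a [b [Hc _]]]]].
- apply (game_lf_right HR'). exact (le_trans HR'X hXC).
- exact (proj1 (IHX K (or_introl HK)) (hm3 K (or_introl HK)) HCK (proj1 (le_inv hXC) K HK)).
- rewrite Hc. apply game_lf_atom, Order.POrderTheory.le_refl.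
Qed.

Lemma mono_equiv_lf (C M : game) : monotone M -> gequiv C M -> lf C C.
Proof.
intros hm [hCM hMC].
assert (hMlf : lf M C).
{ destruct (mono_inv hm) as [h1 _].
  destruct M as [a|I J hI hJ L R].
  - apply (proj2 (proj2 (le_inv hMC))). left; exact I.
  - destruct hI as [i]. apply (@le_lf_trans _ (L i)).
    + apply h1. exists i; auto.
    + apply (proj1 (le_inv hMC)). exists i; auto. }
exact (proj1 (chain C M) hm hCM hMlf).
Qed.

Section LeftOpt.
Variables (C K : game).
Hypothesis HK : left_opt C K.
Hypothesis Hnd : forall H K', left_opt C H -> left_opt C K' -> ~ game_eq H K' -> ~ le K' H.
Hypothesis Hnr : forall H K', left_opt C H -> right_opt H K' -> ~ le K' C.

Lemma left_aux : forall X,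
  (monotone X -> le K X -> lf X C -> exists M, monotone M /\ gequiv K M) /\
  (monotone X -> lf K X -> le X C -> exists M, monotone M /\ gequiv K M).
Proof.
intro X; induction X as [X IHX] using (well_founded_ind opt_wf).
assert (P : monotone X -> le K X -> lf X C -> exists M, monotone M /\ gequiv K M).
{ intros hm hKX hXC. destruct (mono_inv hm) as [_ [_ hm3]].
  destruct (lf_inv hXC) as [[W [HW HWC]]|[[L' [HL' HXL']]|[a [b [_ [Hc _]]]]]].
  - exact (proj2 (IHX W (or_intror HW)) (hm3 W (or_intror HW)) (proj1 (proj2 (le_inv hKX)) W HW) HWC).
  - destruct (classic (game_eq L' K)) as [He|He].
    + exists X. split; auto. split; auto. exact (le_trans HXL' (proj1 (eq_le He))).
    + exfalso. exact (Hnd HL' HK He (le_trans hKX HXL')).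
  - exfalso. pose proof HK as HK'. rewrite Hc in HK'. destruct HK'. }
split; auto.
intros hm hKX hXC. destruct (mono_inv hm) as [_ [_ hm3]].
destruct (lf_inv hKX) as [[W' [HW' HW'X]]|[[K2 [HK2 HKK2]]|[a [b [Hk [Hx Hab]]]]]].
- exfalso. exact (Hnr HK HW' (le_trans HW'X hXC)).
- exact (proj1 (IHX K2 (or_introl HK2)) (hm3 K2 (or_introl HK2)) HKK2 (proj1 (le_inv hXC) K2 HK2)).
- apply P; auto.
  + rewrite Hk Hx. apply atom_le; auto.
  + apply (proj2 (proj2 (le_inv hXC))). left. rewrite Hx. exact I.
Qed.

Lemma left_equiv (M : game) : monotone M -> gequiv C M -> exists M', monotone M' /\ gequiv K M'.
Proof.
intros hm [hCM hMC]. apply (proj2 (left_aux M)); auto.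
apply (proj1 (le_inv hCM)); auto.
Qed.
End LeftOpt.

Section RightOpt.
Variables (C K : game).
Hypothesis HK : right_opt C K.
Hypothesis Hnd : forall H K', right_opt C H -> right_opt C K' -> ~ game_eq H K' -> ~ le H K'.
Hypothesis Hnr : forall H K', right_opt C H -> left_opt H K' -> ~ le C K'.

Lemma right_aux : forall X,
  (monotone X -> le X K -> lf C X -> exists M, monotone M /\ gequiv K M) /\
  (monotone X -> lf X K -> le C X -> exists M, monotone M /\ gequiv K M).
Proof.
intro X; induction X as [X IHX] using (well_founded_ind opt_wf).
assert (P : monotone X -> le X K -> lf C X -> exists M, monotone M /\ gequiv K M).
{ intros hm hXK hCX. destruct (mono_inv hm) as [_ [_ hm3]].
  destruct (lf_inv hCX) as [[R' [HR' HR'X]]|[[W [HW HCW]]|[a [b [Hc _]]]]].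
  - destruct (classic (game_eq R' K)) as [He|He].
    + exists X. split; auto. split; auto. exact (le_trans (proj2 (eq_le He)) HR'X).
    + exfalso. exact (Hnd HR' HK He (le_trans HR'X hXK)).
  - exact (proj2 (IHX W (or_introl HW)) (hm3 W (or_introl HW)) (proj1 (le_inv hXK) W HW) HCW).
  - exfalso. pose proof HK as HK'. rewrite Hc in HK'. destruct HK'. }
split; auto.
intros hm hXK hCX. destruct (mono_inv hm) as [_ [_ hm3]].
destruct (lf_inv hXK) as [[K2 [HK2 HK2K]]|[[W' [HW' HXW']]|[a [b [Hx [Hk Hab]]]]]].
- exact (proj1 (IHX K2 (or_intror HK2)) (hm3 K2 (or_intror HK2)) HK2K (proj1 (proj2 (le_inv hCX)) K2 HK2)).
- exfalso. exact (Hnr HK HW' (le_trans hCX HXW')).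
- apply P; auto.
  + rewrite Hk Hx. apply atom_le; auto.
  + apply (proj2 (proj2 (le_inv hCX))). right. rewrite Hx. exact I.
Qed.

Lemma right_equiv (M : game) : monotone M -> gequiv C M -> exists M', monotone M' /\ gequiv K M'.
Proof.
intros hm [hCM hMC]. apply (proj2 (right_aux M)); auto.
apply (proj1 (proj2 (le_inv hMC))); auto.
Qed.
End RightOpt.

Lemma canon_pass (C : game) : canonical C ->
  forall M, monotone M -> gequiv C M -> passable C.
Proof.
induction 1 as [C h1 h2 h3 h4 h5 h6 IH]. intros M hm he.
constructor.
- exact (mono_equiv_lf hm he).
- intros K [HK|HK].
  + destruct (left_equiv HK h1 h3 hm he) as [M' [hm' he']].
    exact (IH K (or_introl HK) M' hm' he').
  + destruct (right_equiv HK h2 h4 hm he) as [M' [hm' he']].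
    exact (IH K (or_intror HK) M' hm' he').
Qed.

End Proofs.

Theorem corollary6p6 (disp : Order.disp_t) (A : tbPOrderType disp)
  (G C : game A) :
  canonical C -> game_equiv C G ->
  ((exists M : game A, monotone M /\ game_equiv G M) <-> passable C).
Proof.
intros hC [hCG hGC]. split.
- intros [M [hm [hGM hMG]]]. apply (canon_pass hC hm).
  split; [exact (le_trans hCG hGM)|exact (le_trans hMG hGC)].
- intros hp. destruct (pass_mono hp) as [M [hm [hCM hMC]]].
  exists M. split; auto. split; [exact (le_trans hGC hCM)|exact (le_trans hMC hCG)].
Qed.
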